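(* Let $\Pi$ be an $n$-dimensional linear space satisfying the exchange axiom and the axiom (P2), let $0<k<n-1$, let $B=\{p_1,\dots,p_{n+1}\}$ be a base of $\Pi$, and let $\mathcal{B}_k$ be the base subset of $\mathcal{G}_k(\Pi)$ associated with $B$. If $\mathcal{R}$ is a maximal inexact subset of $\mathcal{B}_k$, then there exist distinct indices $i,j$ such that $$\mathcal{R}=\mathcal{B}_k(-i)\cup\mathcal{B}_k(p_ip_j).$$
   Context: A linear space $\Pi=(P,\mathcal{L})$ is a set $P$ of points with a family $\mathcal{L}$ of proper subsets (lines) such that each line has at least two points and any two distinct points $p,q$ lie on exactly one line $pq$. A subspace is a set $S\subset P$ with $pq\subset S$ for all distinct $p,q\in S$; $\overline{X}$ is the smallest subspace containing $X$. A set $X$ is independent if $\overline{X}$ is not spanned by a proper subset of $X$; a base of $\Pi$ is an independent set spanning $P$. A subspace is $m$-dimensional if $m+1$ is the smallest number of points spanning it. Exchange axiom: for every $X\subset P$ and $p_1,p_2\in P\setminus\overline{X}$, $p_2\in\overline{X\cup\{p_1\}}$ implies $p_1\in\overline{X\cup\{p_2\}}$. Axiom (P2): every line has at least three points. $\mathcal{G}_k(\Pi)$ is the set of $k$-dimensional subspaces; the base subset of $\mathcal{G}_k(\Pi)$ associated with a base $B$ is the set of all $k$-dimensional subspaces spanned by points of $B$. A subset $\mathcal{R}\subset\mathcal{B}_k$ is exact if $\mathcal{B}_k$ is the unique base subset of $\mathcal{G}_k(\Pi)$ containing $\mathcal{R}$, and inexact otherwise; a maximal inexact subset is one maximal under inclusion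 among inexact subsets of $\mathcal{B}_k$. $\mathcal{B}_k(-i)$ is the set of elements of $\mathcal{B}_k$ not containing $p_i$, and $\mathcal{B}_k(p_ip_j)$ is the set of elements of $\mathcal{B}_k$ containing the line $p_ip_j$. *)

(* Defs.v *)
(* Sets are predicates [T -> Prop]; equality of sets is Leibniz
   equality, which coincides with extensional set equality. *)
From Stdlib Require Import List Arith.
Import ListNotations.

Section LinearSpaces.
Context {P : Type}.
Variable L : (P -> Prop) -> Prop.

Definition subset (X Y : P -> Prop) : Prop := forall x, X x -> Y x.
Definition fullset : P -> Prop := fun _ => True.

Definition linear_space : Prop :=
  (forall l, L l -> exists x, ~ l x) /\
  (forall l, L l -> exists a b, a <> b /\ l a /\ l b) /\
  (forall p q, p <> q -> exists l, L l /\ l p /\ l q /\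
      forall l', L l' -> l' p -> l' q -> l' = l).

Definition is_line_through (p q : P) (l : P -> Prop) : Prop := L l /\ l p /\ l q.

Definition subspace (S : P -> Prop) : Prop :=
  forall p q, S p -> S q -> p <> q ->
    forall l, is_line_through p q l -> subset l S.

Definition closure (X : P -> Prop) : P -> Prop :=
  fun x => forall S, subspace S -> subset X S -> S x.

Definition independent (X : P -> Prop) : Prop :=
  ~ exists Y, subset Y X /\ (exists x, X x /\ ~ Y x) /\ closure Y = closure X.

Definition base (B : P -> Prop) : Prop := independent B /\ closure B = fullset.

Definition has_card (X : P -> Prop) (c : nat) : Prop :=
  exists l : list P, NoDup l /\ length l = c /\ forall x, X x <-> In x l.

Definition dimension (S : P -> Prop) (m : nat) : Prop :=
  subspace S /\
  (exists X, has_card X (m + 1) /\ closure X = S) /\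
  (forall X c, has_card X c -> closure X = S -> m + 1 <= c).

Definition exchange_axiom : Prop :=
  forall (X : P -> Prop) p1 p2, ~ closure X p1 -> ~ closure X p2 ->
    closure (fun x => X x \/ x = p1) p2 -> closure (fun x => X x \/ x = p2) p1.

Definition axiom_P2 : Prop :=
  forall l, L l -> exists a b c, a <> b /\ a <> c /\ b <> c /\ l a /\ l b /\ l c.

Definition Grass (k : nat) : (P -> Prop) -> Prop := fun S => dimension S k.

Definition base_subset (B : P -> Prop) (k : nat) : (P -> Prop) -> Prop :=
  fun S => Grass k S /\ exists X, subset X B /\ closure X = S.

Definition subsetG (R R' : (P -> Prop) -> Prop) : Prop := forall S, R S -> R' S.

Definition inexact (B : P -> Prop) (k : nat) (R : (P -> Prop) -> Prop) : Prop :=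
  subsetG R (base_subset B k) /\
  exists B', base B' /\ subsetG R (base_subset B' k) /\ base_subset B' k <> base_subset B k.

Definition exact (B : P -> Prop) (k : nat) (R : (P -> Prop) -> Prop) : Prop :=
  subsetG R (base_subset B k) /\
  forall B', base B' -> subsetG R (base_subset B' k) -> base_subset B' k = base_subset B k.

Definition maximal_inexact (B : P -> Prop) (k : nat) (R : (P -> Prop) -> Prop) : Prop :=
  inexact B k R /\
  forall R', inexact B k R' -> subsetG R R' -> R' = R.

Definition Bk_minus (B : P -> Prop) (k : nat) (p : P) : (P -> Prop) -> Prop :=
  fun S => base_subset B k S /\ ~ S p.

Definition Bk_line (B : P -> Prop) (k : nat) (p q : P) : (P -> Prop) -> Prop :=
  fun S => base_subset B k S /\ exists l, is_line_through p q l /\ subset l S.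

End LinearSpaces.

(* Main.v *)
Require Import Defs.
From Stdlib Require Import Arith List Lia Classical FunctionalExtensionality PropExtensionality.
From Stdlib Require Import Bool.
Import ListNotations.

Lemma set_ext {P : Type} (X Y : P -> Prop) : (forall x, X x <-> Y x) -> X = Y.
Proof. intros H; apply functional_extensionality; intros x; apply propositional_extensionality; auto. Qed.


Lemma cl_ext {P : Type} (L : (P -> Prop) -> Prop) (X : P -> Prop) x : X x -> closure L X x.
Proof. intros Hx S _ HS; auto. Qed.

Lemma cl_min {P : Type} (L : (P -> Prop) -> Prop) (X S : P -> Prop) :
  subspace L S -> (forall x, X x -> S x) -> forall x, closure L X x -> S x.
Proof. intros HS HXS x Hx; apply Hx; auto. Qed.

Lemma cl_subspace {P : Type} (L : (P -> Prop) -> Prop) (X : P -> Prop) : subspace L (closure L X).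
Proof.
  intros a b Ha Hb Hab l Hl x Hx S HS HXS.
  exact (HS a b (Ha S HS HXS) (Hb S HS HXS) Hab l Hl x Hx).
Qed.

Lemma cl_mono {P : Type} (L : (P -> Prop) -> Prop) (X Y : P -> Prop) :
  (forall x, X x -> Y x) -> forall x, closure L X x -> closure L Y x.
Proof. intros H x Hx S HS HYS; apply Hx; auto. intros y Hy; apply HYS; auto. Qed.

Lemma cl_trans {P : Type} (L : (P -> Prop) -> Prop) (X Y : P -> Prop) :
  (forall x, X x -> closure L Y x) -> forall x, closure L X x -> closure L Y x.
Proof. intros H. apply cl_min; auto. apply cl_subspace. Qed.

Lemma line_in_sub {P : Type} (L : (P -> Prop) -> Prop) (S : P -> Prop) a b l :
  subspace L S -> S a -> S b -> a <> b -> L l -> l a -> l b -> forall x, l x -> S x.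
Proof. intros HS Ha Hb Hab Hl la lb x lx. apply (HS a b Ha Hb Hab l); [repeat split; auto| auto]. Qed.

Lemma small_sub {P : Type} (L : (P -> Prop) -> Prop) (X : P -> Prop) c :
  (forall y, X y -> y = c) -> forall x, closure L X x -> X x.
Proof.
  intros H. apply cl_min; auto.
  intros a b Ha Hb Hab. exfalso. apply Hab. rewrite (H a Ha), (H b Hb). auto.
Qed.

Definition indep' {P : Type} (L : (P -> Prop) -> Prop) (X : P -> Prop) :=
  forall x, X x -> ~ closure L (fun y => X y /\ y <> x) x.

Lemma indep_to' {P : Type} (L : (P -> Prop) -> Prop) (X : P -> Prop) :
  independent L X -> indep' L X.
Proof.
  intros HI x Hx Hc. apply HI. exists (fun y => X y /\ y <> x). split; [|split].
  - intros y [Hy _]; auto.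
  - exists x; split; auto. intros [_ H]; auto.
  - apply set_ext; intros y; split.
    + apply cl_mono. intros z [Hz _]; auto.
    + apply cl_trans. intros z Hz. destruct (classic (z = x)) as [->|Hne]; auto.
      apply cl_ext; auto.
Qed.

Lemma indep_of' {P : Type} (L : (P -> Prop) -> Prop) (X : P -> Prop) :
  indep' L X -> independent L X.
Proof.
  intros HI [Y [HYX [[x [Hx HnY]] HYc]]]. apply (HI x Hx).
  assert (H : closure L Y x). { rewrite HYc. apply cl_ext; auto. }
  revert H. apply cl_mono. intros y Hy; split; auto. intros ->; auto.
Qed.

Lemma indep'_sub {P : Type} (L : (P -> Prop) -> Prop) (X Y : P -> Prop) :
  indep' L X -> (forall y, Y y -> X y) -> indep' L Y.
Proof.
  intros HI HYX y Hy Hc. apply (HI y (HYX y Hy)). revert Hc. apply cl_mono.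
  intros z [Hz Hne]; auto.
Qed.

Inductive gen {P : Type} (L : (P -> Prop) -> Prop) (X : P -> Prop) : P -> Prop :=
| gen_base : forall x, X x -> gen L X x
| gen_line : forall a b l x, gen L X a -> gen L X b -> a <> b -> L l -> l a -> l b -> l x -> gen L X x.

Lemma gen_cl {P : Type} (L : (P -> Prop) -> Prop) (X : P -> Prop) x :
  closure L X x <-> gen L X x.
Proof.
  split.
  - intros H. apply H.
    + intros a b Ha Hb Hab l [Hl [la lb]] y ly. exact (gen_line L X a b l y Ha Hb Hab Hl la lb ly).
    + intros y Hy; apply gen_base; auto.
  - induction 1 as [x Hx | a b l x Ga IHa Gb IHb Hab Hl la lb lx].
    + apply cl_ext; auto.
    + apply (line_in_sub L (closure L X) a b l (cl_subspace L X) IHa IHb Hab Hl la lb x lx).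
Qed.

Lemma gen_mono {P : Type} (L : (P -> Prop) -> Prop) (X Y : P -> Prop) :
  (forall x, X x -> Y x) -> forall x, gen L X x -> gen L Y x.
Proof. intros H x Hx; induction Hx as [x Hx | a b l x Ga IHa Gb IHb Hab Hl la lb lx].
  apply gen_base; auto. exact (gen_line L Y a b l x IHa IHb Hab Hl la lb lx). Qed.

Lemma cl_finitary {P : Type} (L : (P -> Prop) -> Prop) (X : P -> Prop) x :
  closure L X x -> exists F, (forall y, In y F -> X y) /\ closure L (fun y => In y F) x.
Proof.
  intros H. apply gen_cl in H. induction H as [x Hx | a b l x Ga IHgen1 Gb IHgen2 Hab Hl la lb lx].
  - exists [x]. split. intros y [->|[]]; auto. apply cl_ext; simpl; auto.
  - destruct IHgen1 as [F1 [HF1 Ha]]. destruct IHgen2 as [F2 [HF2 Hb]].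
    exists (F1 ++ F2). split.
    + intros y Hy; apply in_app_or in Hy; destruct Hy; auto.
    + apply (line_in_sub L _ a b l (cl_subspace _ _)); auto.
      revert Ha; apply cl_mono; intros; apply in_or_app; auto.
      revert Hb; apply cl_mono; intros; apply in_or_app; auto.
Qed.
Lemma meet2fin {P : Type} (L : (P -> Prop) -> Prop) (I Y : P -> Prop) e :
  exchange_axiom L -> indep' L I -> (forall y, Y y -> I y) -> closure L Y e ->
  forall A X, (forall x, X x -> I x) -> (forall x, X x -> Y x \/ In x A) ->
  closure L X e -> closure L (fun y => X y /\ Y y) e.
Proof.
  intros Hex HI HYI HYe A. induction A as [|a A IH]; intros X HXI HXA HXe.
  - revert HXe; apply cl_mono. intros x Hx; split; auto.
    destruct (HXA x Hx) as [H|[]]; auto.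
  - destruct (classic (X a /\ ~ Y a)) as [[HXa HYa]|Hn].
    + set (X' := fun y => X y /\ y <> a).
      destruct (classic (closure L X' e)) as [He|He].
      * assert (H := IH X'). revert H. unfold X'. intros H.
        eapply cl_mono; [|apply H].
        -- intros y [[Hy _] Hy']; auto.
        -- intros x [Hx _]; auto.
        -- intros x [Hx Hne]. destruct (HXA x Hx) as [H1|[H1|H1]]; auto. congruence.
        -- exact He.
      * exfalso. apply (HI a (HXI a HXa)).
        assert (Ha : ~ closure L X' a).
        { intros Hc. apply (HI a (HXI a HXa)). revert Hc; apply cl_mono.
          intros y [Hy Hne]; auto. }
        assert (H2 : closure L (fun x => X' x \/ x = a) e).
        { revert HXe; apply cl_mono. intros y Hy.
          destruct (classic (y = a)); [right; auto|left; split; auto]. }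
        pose proof (Hex X' a e Ha He H2) as H3.
        revert H3; apply cl_trans. intros y [[Hy Hne]| ->].
        -- apply cl_ext; split; auto.
        -- revert HYe; apply cl_mono. intros y Hy; split; auto. intros ->; auto.
    + apply IH; auto. intros x Hx. destruct (HXA x Hx) as [H1|[H1|H1]]; auto.
      subst x. left. apply NNPP. intros Hn'. apply Hn; auto.
Qed.

Lemma meet2 {P : Type} (L : (P -> Prop) -> Prop) (I X Y : P -> Prop) e :
  exchange_axiom L -> indep' L I -> (forall y, X y -> I y) -> (forall y, Y y -> I y) ->
  closure L X e -> closure L Y e -> closure L (fun y => X y /\ Y y) e.
Proof.
  intros Hex HI HXI HYI HX HY.
  destruct (cl_finitary L X e HX) as [F [HF HFe]].
  pose proof (meet2fin L I Y e Hex HI HYI HY F (fun y => In y F)) as H.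
  eapply cl_mono; [|apply H; auto].
  - intros y [Hy Hy']; auto.
Qed.

Lemma meet_fam {P : Type} (L : (P -> Prop) -> Prop) (I : P -> Prop) e (T : nat -> P -> Prop) :
  exchange_axiom L -> indep' L I ->
  forall js X0, (forall y, X0 y -> I y) -> closure L X0 e ->
  (forall j, In j js -> exists Xj, (forall y, Xj y -> I y) /\ closure L Xj e /\ (forall y, Xj y -> T j y)) ->
  closure L (fun y => X0 y /\ forall j, In j js -> T j y) e.
Proof.
  intros Hex HI js. induction js as [|j js IH]; intros X0 HX0 He Hf.
  - revert He; apply cl_mono. intros y Hy; split; auto. intros j [].
  - destruct (Hf j (or_introl eq_refl)) as [Xj [HXj [HXje HXjT]]].
    pose proof (meet2 L I X0 Xj e Hex HI HX0 HXj He HXje) as H.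
    pose proof (IH (fun y => X0 y /\ Xj y)) as H'.
    eapply cl_mono; [|apply H'; auto].
    + intros y [[Hy1 Hy2] Hy3]. split; auto. intros j' [<-|Hj']; auto.
    + intros y [Hy _]; auto.
    + intros j' Hj'; apply Hf; simpl; auto.
Qed.

Lemma steinitz {P : Type} (L : (P -> Prop) -> Prop) :
  exchange_axiom L ->
  forall (Z I : list P) (A : P -> Prop), NoDup I -> (forall x, In x I -> ~ A x) ->
  indep' L (fun x => In x I \/ A x) ->
  (forall x, In x I -> closure L (fun y => A y \/ In y Z) x) -> length I <= length Z.
Proof.
  intros Hex Z. induction Z as [|z Z IH]; intros I A HND HdA HI Hcov.
  - destruct I as [|x I]; simpl; auto. exfalso.
    apply (HI x (or_introl (or_introl eq_refl))).
    generalize (Hcov x (or_introl eq_refl)); apply cl_mono.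
    intros y [Hy|[]]. split; auto. intros ->. apply (HdA x (or_introl eq_refl)); auto.
  - destruct (classic (forall x, In x I -> closure L (fun y => A y \/ In y Z) x)) as [Hall|Hn].
    + simpl. specialize (IH I A HND HdA HI Hall). lia.
    + apply not_all_ex_not in Hn. destruct Hn as [a Ha].
      apply imply_to_and in Ha. destruct Ha as [HaI HaZ].
      destruct (in_split a I HaI) as [l1 [l2 ->]].
      assert (HND' := NoDup_remove_1 l1 l2 a HND).
      assert (HaN := NoDup_remove_2 l1 l2 a HND).
      assert (Hz : closure L (fun y => (A y \/ In y Z) \/ y = a) z).
      { apply Hex; auto.
        - intros Hc. apply HaZ. generalize (Hcov a (ltac:(apply in_or_app; simpl; auto))).
          apply cl_trans. intros y [Hy|[->|Hy]]; auto; apply cl_ext; auto.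
        - generalize (Hcov a (ltac:(apply in_or_app; simpl; auto))). apply cl_mono.
          intros y [Hy|[->|Hy]]; auto. }
      rewrite length_app. simpl.
      assert (length (l1 ++ l2) <= length Z); [|rewrite length_app in H; lia].
      apply (IH (l1 ++ l2) (fun y => A y \/ y = a)); auto.
      * intros x Hx [Hx'| ->]; auto. apply (HdA x); auto.
        apply in_app_or in Hx; apply in_or_app; simpl; tauto.
      * eapply indep'_sub; [exact HI|]. intros y [Hy|[Hy| ->]].
        -- left; apply in_app_or in Hy; apply in_or_app; simpl; tauto.
        -- auto.
        -- left; apply in_or_app; simpl; auto.
      * intros x Hx. assert (Hx' : In x (l1 ++ a :: l2)).
        { apply in_app_or in Hx; apply in_or_app; simpl; tauto. }
        generalize (Hcov x Hx'). apply cl_trans. intros y [Hy|[->|Hy]].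
        -- apply cl_ext; left; left; auto.
        -- revert Hz; apply cl_mono. intros w [[Hw|Hw]|Hw]; auto.
        -- apply cl_ext; auto.
Qed.
Lemma NoDup_map_in {A C : Type} (f : A -> C) (l : list A) :
  NoDup l -> (forall a b, In a l -> In b l -> f a = f b -> a = b) -> NoDup (map f l).
Proof.
  induction l as [|a l IH]; intros HND Hinj; simpl; constructor.
  - intros Hin. apply in_map_iff in Hin. destruct Hin as [b [Hb Hbl]].
    inversion HND; subst. assert (b = a) by (apply Hinj; simpl; auto). subst; auto.
  - inversion HND; subst. apply IH; auto. intros; apply Hinj; simpl; auto.
Qed.

Theorem lemma2p3 (P : Type) (L : (P -> Prop) -> Prop) (n k : nat) (p : nat -> P)
  (R : (P -> Prop) -> Prop) :
  linear_space L ->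
  exchange_axiom L ->
  axiom_P2 L ->
  dimension L fullset n ->
  0 < k -> k < n - 1 ->
  (forall i j, i < n + 1 -> j < n + 1 -> p i = p j -> i = j) ->
  let B := fun x => exists i, i < n + 1 /\ x = p i in
  base L B ->
  maximal_inexact L B k R ->
  exists i j, i < n + 1 /\ j < n + 1 /\ i <> j /\
    R = (fun S => Bk_minus L B k (p i) S \/ Bk_line L B k (p i) (p j) S).
Proof.
  intros HLS Hex HP2 Hdim Hk0 Hkn Hinj B HB [[HRB [B' [HB' [HRB' Hne]]]] Hmax].
  assert (HBi : indep' L B) by (apply indep_to'; apply HB).
  assert (HBc : forall x, closure L B x) by (intros x; rewrite (proj2 HB); exact I).
  assert (Bp : forall m, m < n + 1 -> B (p m)) by (intros m Hm; exists m; auto).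
  assert (Hpinj : forall i j, i < n + 1 -> j < n + 1 -> i <> j -> p i <> p j)
    by (intros i j Hi Hj Hij E; apply Hij; apply Hinj; auto).
  assert (Bside : forall i x, i < n + 1 ->
    (forall j, j < n + 1 -> j <> i -> exists S, base_subset L B k S /\ S (p i) /\ ~ S (p j) /\ S x) ->
    x = p i).
  { intros i x Hi Hf.
    pose proof (meet_fam L B x (fun j y => j = i \/ y <> p j) Hex HBi (seq 0 (n+1)) B
                  (fun y h => h) (HBc x)) as H.
    assert (H' := H (ltac:(
      intros j Hj; apply in_seq in Hj;
      destruct (Nat.eq_dec j i) as [Eji|Nji];
      [ exists B; split; [auto|split; [apply HBc|intros; left; auto]]
      | destruct (Hf j ltac:(lia) Nji) as [S [[_ [Y [HYB HYS]]] [Spi [Spj Sx]]]];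
        exists (fun y => B y /\ S y); split; [intros y [h _]; auto|split];
        [ rewrite <- HYS in Sx; revert Sx; apply cl_mono; intros y Hy; split; auto;
          rewrite <- HYS; apply cl_ext; auto
        | intros y [_ Sy]; right; intros ->; auto ] ]))).
    clear H.
    apply (small_sub L _ (p i)) in H'.
    - destruct H' as [[m [Hm ->]] Hall]. destruct (Hall m ltac:(apply in_seq; lia)) as [->|h]; auto.
      congruence.
    - intros y [[m [Hm ->]] Hall]. destruct (Hall m ltac:(apply in_seq; lia)) as [->|h]; auto.
      congruence. }
  assert (HA : exists i j, i < n + 1 /\ j < n + 1 /\ i <> j /\
     forall S, R S -> Bk_minus L B k (p i) S \/ Bk_line L B k (p i) (p j) S).
  { apply NNPP; intros Hno. apply Hne.
    assert (Hsep : forall i j, i < n + 1 -> j < n + 1 -> i <> j -> exists S, R S /\ S (p i) /\ ~ S (p j)).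
    { intros i j Hi Hj Hij. apply NNPP; intros Hn. apply Hno. exists i, j. repeat split; auto.
      intros S HS. destruct (classic (S (p i))) as [Hpi|Hpi].
      - right. split; [apply HRB; auto|]. destruct (classic (S (p j))) as [Hpj|Hpj].
        + destruct HLS as [_ [_ Hline]].
          destruct (Hline (p i) (p j) (Hpinj i j Hi Hj Hij)) as [l [Hl [li [lj _]]]].
          exists l. split; [repeat split; auto|].
          destruct (HRB S HS) as [_ [X [_ HX]]]. rewrite <- HX. intros x lx.
          apply (line_in_sub L _ (p i) (p j) l (cl_subspace L X)); auto; rewrite HX; auto.
        + exfalso; apply Hn; exists S; auto.
      - left. split; auto. }
    assert (HB'i : indep' L B') by (apply indep_to'; apply HB').
    assert (HB'c : forall x, closure L B' x) by (intros x; rewrite (proj2 HB'); exact I).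
    assert (HBB' : forall i, i < n + 1 -> B' (p i)).
    { intros i Hi.
      pose proof (meet_fam L B' (p i) (fun j y => j = i \/ exists S, base_subset L B k S /\ S (p i) /\ ~ S (p j) /\ S y)
         Hex HB'i (seq 0 (n+1)) B' (fun y h => h) (HB'c (p i))) as H.
      assert (H' := H (ltac:(
        intros j Hj; apply in_seq in Hj;
        destruct (Nat.eq_dec j i) as [Eji|Nji];
        [ exists B'; split; [auto|split; [apply HB'c|intros; left; auto]]
        | destruct (Hsep i j Hi ltac:(lia) (fun e => Nji (eq_sym e))) as [S [HS [Spi Spj]]];
          destruct (HRB' S HS) as [_ [Y [HYB HYS]]];
          exists (fun y => B' y /\ S y); split; [intros y [h _]; auto|split];
          [ rewrite <- HYS in Spi; revert Spi; apply cl_mono; intros y Hy; split; auto;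
            rewrite <- HYS; apply cl_ext; auto
          | intros y [_ Sy]; right; exists S; split; [apply HRB; auto| auto] ] ]))).
      clear H.
      apply (small_sub L _ (p i)) in H'.
      - destruct H' as [H1 _]; auto.
      - intros y [_ Hall]. apply (Bside i y Hi). intros j Hj Hji.
        destruct (Hall j ltac:(apply in_seq; lia)) as [->|H2]; [contradiction|exact H2]. }
    assert (E : B' = B).
    { apply set_ext; intros x; split.
      - intros HxB'. apply NNPP; intros HnB. apply (proj1 HB'). exists B. split.
        + intros y [m [Hm ->]]; apply HBB'; auto.
        + split; [exists x; auto|]. rewrite (proj2 HB), (proj2 HB'); auto.
      - intros [m [Hm ->]]; auto. }
    rewrite E; reflexivity. }
  destruct HA as [i [j [Hi [Hj [Hij HRsub]]]]].
  exists i, j. repeat split; auto.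
  assert (Hpij := Hpinj i j Hi Hj Hij).
  assert (HS0 : exists S0, base_subset L B k S0 /\ S0 (p i) /\ ~ S0 (p j)).
  { set (f := fun m => negb (m =? i) && negb (m =? j)).
    set (l0 := filter f (seq 0 (n+1))).
    assert (Hlen : k <= length l0).
    { pose proof (filter_length f (seq 0 (n+1))) as H. rewrite length_seq in H.
      assert (H2 : length (filter (fun x => negb (f x)) (seq 0 (n+1))) <= 2).
      { change 2 with (length [i; j]). apply NoDup_incl_length.
        - apply NoDup_filter, seq_NoDup.
        - intros m Hm. apply filter_In in Hm. destruct Hm as [_ Hm]. unfold f in Hm.
          destruct (m =? i) eqn:E1; [apply Nat.eqb_eq in E1; left; auto|].
          destruct (m =? j) eqn:E2; [apply Nat.eqb_eq in E2; right; left; auto|].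
          simpl in Hm; discriminate. }
      unfold l0. lia. }
    set (l1 := firstn k l0).
    assert (Hl1 : forall m, In m l1 -> m < n + 1 /\ m <> i /\ m <> j).
    { intros m Hm. assert (H : In m l0).
      { rewrite <- (firstn_skipn k l0). apply in_or_app; auto. }
      apply filter_In in H as [H1 H2]. apply in_seq in H1. unfold f in H2.
      apply andb_prop in H2 as [H2 H3]. apply negb_true_iff, Nat.eqb_neq in H2, H3.
      split; [lia|auto]. }
    assert (ND1 : NoDup l1).
    { apply (NoDup_app_remove_r _ (skipn k l0)). unfold l1; rewrite firstn_skipn. apply NoDup_filter, seq_NoDup. }
    assert (Lk : length l1 = k) by (unfold l1; rewrite length_firstn; lia).
    set (idx := i :: l1).
    assert (Hidx : forall m, In m idx -> m < n + 1 /\ m <> j).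
    { intros m [<-|Hm]; [auto|]. apply Hl1 in Hm; tauto. }
    set (X0 := fun x => exists m, In m idx /\ x = p m).
    assert (HX0B : forall x, X0 x -> B x).
    { intros x [m [Hm ->]]. apply Bp, Hidx; auto. }
    exists (closure L X0). split; [split|split].
    - split; [apply cl_subspace|split].
      + exists X0. split; auto. exists (map p idx). split; [|split].
        * apply NoDup_map_in.
          -- constructor; auto. intros Hm. apply Hl1 in Hm. tauto.
          -- intros a b Ha Hb Hab. apply Hinj; auto; [apply Hidx|apply Hidx]; auto.
        * rewrite length_map. simpl. lia.
        * intros x; split.
          -- intros [m [Hm ->]]. apply in_map; auto.
          -- intros Hx. apply in_map_iff in Hx. destruct Hx as [m [<- Hm]]. exists m; auto.
      + intros Z c [lz [NDz [Lz HZ]]] HZc.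
        assert (H := steinitz L Hex lz (map p idx) (fun _ => False)).
        rewrite length_map in H. rewrite <- Lz.
        assert (Li : length idx = k + 1) by (unfold idx; simpl; lia).
        rewrite <- Li. apply H.
        * apply NoDup_map_in.
          -- constructor; auto. intros Hm. apply Hl1 in Hm. tauto.
          -- intros a b Ha Hb Hab. apply Hinj; auto; [apply Hidx|apply Hidx]; auto.
        * auto.
        * apply (indep'_sub L B); auto. intros y [Hy|[]]. apply in_map_iff in Hy.
          destruct Hy as [m [<- Hm]]. apply Bp, Hidx; auto.
        * intros x Hx. assert (Hc : closure L X0 x).
          { apply cl_ext. apply in_map_iff in Hx. destruct Hx as [m [<- Hm]]. exists m; auto. }
          rewrite <- HZc in Hc. revert Hc; apply cl_mono. intros y Hy; right; apply HZ; auto.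
    - exists X0; split; auto.
    - apply cl_ext. exists i; split; [left|]; auto.
    - intros Hc. apply (HBi (p j) (Bp j Hj)). revert Hc; apply cl_mono.
      intros x [m [Hm ->]]. split; [apply Bp, Hidx; auto|]. apply Hpinj; auto; apply Hidx; auto. }
  symmetry. apply Hmax; [|exact HRsub].
  split.
  { intros S [[HS _]|[HS _]]; auto. }
  destruct HLS as [_ [_ Hline]].
  destruct (Hline (p i) (p j) Hpij) as [l [Hl [li [lj Huniq]]]].
  destruct (HP2 l Hl) as [a [b [c [Hab [Hac [Hbc [la [lb lc]]]]]]]].
  assert (Hq : exists q, l q /\ q <> p i /\ q <> p j).
  { destruct (classic (a = p i \/ a = p j)) as [H1|H1];
      [|exists a; split; [auto|split; intros E; apply H1; auto]].
    destruct (classic (b = p i \/ b = p j)) as [H2|H2];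
      [|exists b; split; [auto|split; intros E; apply H2; auto]].
    exists c; split; auto.
    destruct H1 as [-> | ->]; destruct H2 as [-> | ->]; split; congruence. }
  destruct Hq as [q [lq [qi qj]]].
  assert (Hqn : ~ closure L (fun y => B y /\ y <> p i) q).
  { intros Hc. apply (HBi (p i) (Bp i Hi)).
    apply (line_in_sub L _ q (p j) l (cl_subspace L _)); auto.
    apply cl_ext; split; auto. }
  exists (fun x => (B x /\ x <> p i) \/ x = q). split; [|split].
  - split.
    + apply indep_of'. intros x Hx Hc. destruct (classic (x = q)) as [->|Hxq].
      * apply Hqn. revert Hc; apply cl_mono.
        intros y [[[Hy Hyi]| ->] Hne']; [split; auto| contradiction].
      * destruct Hx as [[HxB Hxi]|Hx]; [|contradiction].
        set (W := fun y => B y /\ y <> p i /\ y <> x).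
        assert (HWx : ~ closure L W x).
        { intros Hc'. apply (HBi x HxB). revert Hc'; apply cl_mono; intros y [Hy [_ Hyx]]; split; auto. }
        assert (HWq : ~ closure L W q).
        { intros Hc'; apply Hqn; revert Hc'; apply cl_mono; intros y [Hy [Hyi _]]; split; auto. }
        assert (H1 : closure L (fun y => W y \/ y = q) x).
        { revert Hc; apply cl_mono. intros y [[[Hy Hyi]| ->] Hyx]; [left; split; auto | right; auto]. }
        pose proof (Hex W q x HWq HWx H1) as H2. apply Hqn. revert H2; apply cl_mono.
        intros y [[Hy [Hyi _]]| ->]; split; auto.
    + apply set_ext; intros x; split; [intros; exact I|intros _].
      apply (cl_trans L B); [|apply HBc]. intros y [m [Hm ->]].
      destruct (Nat.eq_dec m i) as [->|Hmi].
      * apply (line_in_sub L _ q (p j) l (cl_subspace L _)); auto.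
        -- apply cl_ext; right; auto.
        -- apply cl_ext; left; split; [apply Bp; auto|auto].
      * apply cl_ext; left; split; [apply Bp; auto|]. apply Hpinj; auto.
  - intros S [[[HG [X [HXB HXS]]] HnS]|[[HG [X [HXB HXS]]] [l' [[Hl' [l'i l'j]] Hl'S]]]].
    + split; auto. exists X. split; auto. intros y Hy. left. split; auto.
      intros ->. apply HnS. rewrite <- HXS; apply cl_ext; auto.
    + split; auto. assert (l' = l) by (apply Huniq; auto). subst l'.
      exists (fun y => (X y /\ y <> p i) \/ y = q). split.
      * intros y [[Hy Hyi]| ->]; [left; split; auto | right; auto].
      * apply set_ext; intros x; split.
        -- intros Hx. rewrite <- HXS. revert Hx. apply cl_trans. intros y [[Hy _]| ->].
           ++ apply cl_ext; auto.
           ++ rewrite HXS; apply Hl'S; auto.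
        -- intros Hx. rewrite <- HXS in Hx. revert Hx. apply cl_trans. intros y Hy.
           destruct (classic (y = p i)) as [->|Hyi].
           ++ assert (HXj : X (p j)).
              { apply NNPP; intros HnX. apply (HBi (p j) (Bp j Hj)).
                assert (H : S (p j)) by (apply Hl'S; auto). rewrite <- HXS in H. revert H; apply cl_mono.
                intros z Hz; split; [auto| intros ->; contradiction]. }
              apply (line_in_sub L _ q (p j) l (cl_subspace L _)); auto.
              ** apply cl_ext; right; auto.
              ** apply cl_ext; left; split; auto.
           ++ apply cl_ext; left; split; auto.
  - intros Heq. destruct HS0 as [S0 [HS0 [S0i S0j]]].
    rewrite <- Heq in HS0. destruct HS0 as [_ [Y [HYB HYS]]].
    assert (HS0q : ~ S0 q).
    { intros Hq. apply S0j. rewrite <- HYS in *.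
      apply (line_in_sub L _ (p i) q l (cl_subspace L _)); auto. }
    apply (HBi (p i) (Bp i Hi)). rewrite <- HYS in S0i. revert S0i; apply cl_mono.
    intros y Hy. assert (Sy : S0 y) by (rewrite <- HYS; apply cl_ext; auto).
    destruct (HYB y Hy) as [[HyB Hyi]| ->]; [split; auto|contradiction].
Qed.
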